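(* Let $\psi, f: S^2\times H\to\mathbb{R}$ be functions for which the integrals below exist, and define the spherical voxel convolution at $p\in S^2\times H$ by $$[\psi\star f](p) = \int_0^{2\pi}\int_{SO(3)}\psi_\mathcal{T}(R^{-1}\mathcal{T}(p))\,f_\mathcal{T}(RZ(\gamma))\,dR\,d\gamma .$$ Suppose that $\psi_\mathcal{T}(R)=\psi_\mathcal{T}(RZ(\theta))$ for all $R\in SO(3)$ and all angles $\theta$. Then for every $Q\in SO(3)$ and every $p\in S^2\times H$, $$[\psi\star L_Qf](Qp) = [\psi\star f](p).$$
   Context: $Z(\theta)$, $Y(\theta)$ are the rotation matrices about the $z$- and $y$-axes by angle $\theta$; $n=(0,0,1)^T$; points of $S^2$ are $s(\alpha,\beta)=Z(\alpha)Y(\beta)n$ with $\alpha\in[0,2\pi]$, $\beta\in[0,\pi]$; $H=[0,1]$; $Q\in SO(3)$ acts on $S^2\times H$ by $Q(s,h)=(Qs,h)$. The map $\mathcal{T}: S^2\times H\to SO(3)$ is $\mathcal{T}(s(\alpha,\beta),h)=Z(\alpha)Y(\beta)Z(2\pi h)$, which is a bijection almost everywhere. For a function $g$ on $S^2\times H$, its adjoint function on $SO(3)$ is $g_\mathcal{T}(R)=g(\mathcal{T}^{-1}(R))$ (defined almost everywhere). The rotation operator is $[L_Qf](x)=f(Q^{-1}x)$. $dR$ is Haar measure on $SO(3)$ and $d\gamma$ is Lebesgue measure on $[0,2\pi]$. *)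

(* Defs.v *)
From HB Require Import structures.
From mathcomp Require Import all_boot all_order all_algebra.
From mathcomp Require Import all_classical all_reals all_analysis.
Set Implicit Arguments. Unset Strict Implicit. Unset Printing Implicit Defensive.
Import Order.TTheory GRing.Theory Num.Theory numFieldNormedType.Exports.
Local Open Scope classical_set_scope.
Local Open Scope ring_scope.

Section Defs.
Variable R : realType.

Definition mx3 (a b c d e f g h i : R) : 'M[R]_3 :=
  \matrix_(k < 3, l < 3)
    nth 0 (nth [::] [:: [:: a; b; c]; [:: d; e; f]; [:: g; h; i]] k) l.

Definition Zrot (t : R) : 'M[R]_3 :=
  mx3 (cos t) (- sin t) 0
      (sin t) (cos t)   0
      0       0         1.

Definition Yrot (t : R) : 'M[R]_3 :=
  mx3 (cos t)   0 (sin t)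
      0         1 0
      (- sin t) 0 (cos t).

Definition nvec : 'cV[R]_3 := \col_(k < 3) (if val k == 2%N then 1 else 0).

Definition sph (a b : R) : 'cV[R]_3 := Zrot a *m Yrot b *m nvec.

Definition angles_ok (ab : R * R) : Prop :=
  0 <= ab.1 <= 2 * pi /\ 0 <= ab.2 <= pi.

Definition S2 : set 'cV[R]_3 :=
  [set s | exists ab, angles_ok ab /\ s = sph ab.1 ab.2].

Definition S2H : set ('cV[R]_3 * R) :=
  [set p | S2 p.1 /\ 0 <= p.2 <= 1].

Definition SO3 : set 'M[R]_3 :=
  [set M | M^T *m M = 1%:M /\ \det M = 1].

(* the map T(s(alpha,beta), h) = Z(alpha) Y(beta) Z(2 pi h);
   spherical coordinates (alpha, beta) of s are chosen (they are unique
   except at the poles / alpha in {0, 2pi}) *)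
Definition Tmap (p : 'cV[R]_3 * R) : 'M[R]_3 :=
  let ab := xget (0, 0) [set ab | angles_ok ab /\ sph ab.1 ab.2 = p.1] in
  Zrot ab.1 *m Yrot ab.2 *m Zrot (2 * pi * p.2).

(* an inverse of T (T is a bijection almost everywhere; a preimage in
   S^2 x H is chosen) *)
Definition Tinv (M : 'M[R]_3) : 'cV[R]_3 * R :=
  xget (nvec, 0) [set p | S2H p /\ Tmap p = M].

Definition adjT (g : 'cV[R]_3 * R -> R) (M : 'M[R]_3) : R := g (Tinv M).

Definition actQ (Q : 'M[R]_3) (p : 'cV[R]_3 * R) : 'cV[R]_3 * R :=
  (Q *m p.1, p.2).

Definition LQ (Q : 'M[R]_3) (f : 'cV[R]_3 * R -> R) (p : 'cV[R]_3 * R) : R :=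
  f (actQ (invmx Q) p).

(* SO(3) as a measurable space with the Borel sigma-algebra of matrices *)
Definition MXB : Type := g_sigma_algebraType (open : set (set 'M[R]_(3, 3))).

(* mu is the (normalised) Haar measure of SO(3): concentrated on SO(3),
   total mass 1, left-invariant *)
Definition haar (mu : {measure set MXB -> \bar R}) : Prop :=
  [/\ mu (~` (SO3 : set MXB)) = 0%E,
      mu (SO3 : set MXB) = 1%E &
      forall Q : 'M[R]_3, SO3 Q -> forall A : set MXB, measurable A ->
        mu ((fun M : MXB => (Q *m M : MXB)) @^-1` A) = mu A].

(* integrand of the spherical voxel convolution, as a function of (R, gamma) *)
Definition conv_integrand (psi f : 'cV[R]_3 * R -> R) (p : 'cV[R]_3 * R)
  (z : MXB * R) : R :=
  adjT psi (invmx z.1 *m Tmap p) * adjT f (z.1 *m Zrot z.2).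

Definition conv_dom : set (MXB * R) := (SO3 : set MXB) `*` `[0, 2 * pi].

Definition sconv (mu : {measure set MXB -> \bar R}) (psi f : 'cV[R]_3 * R -> R)
  (p : 'cV[R]_3 * R) : R :=
  Rintegral (mu \x lebesgue_measure)%E conv_dom (conv_integrand psi f p).

End Defs.

(* Main.v *)
Require Import Defs.
From HB Require Import structures.
From mathcomp Require Import all_boot all_order all_algebra.
From mathcomp Require Import all_classical all_reals all_analysis.
From mathcomp Require Import measurable_realfun.
From mathcomp Require Import ring lra.
Set Implicit Arguments. Unset Strict Implicit. Unset Printing Implicit Defensive.
Import Order.TTheory GRing.Theory Num.Theory numFieldNormedType.Exports.
Local Open Scope classical_set_scope.
Local Open Scope ring_scope.


Section Geo.
Variable R : realType.

Lemma sum3 (F : 'I_3 -> R) : \sum_(k < 3) F k = F ord0 + F (lift ord0 ord0) + F (lift ord0 (lift ord0 ord0)).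
Proof. by rewrite !big_ord_recl big_ord0 addr0 addrA. Qed.
Lemma sum2 (F : 'I_2 -> R) : \sum_(k < 2) F k = F ord0 + F (lift ord0 ord0).
Proof. by rewrite !big_ord_recl big_ord0 addr0. Qed.

Ltac mxext := apply/matrixP; move=> [[|[|[|?]]] ?] [[|[|[|?]]] ?] //; rewrite ?(mxE, sum3) /=.

Definition e (A : 'M[R]_3) (i j : nat) : R := A (inord i) (inord j).

Lemma det3 (A : 'M[R]_3) : \det A =
  A 0 0 * (A 1 1 * A 2 2 - A 1 2 * A 2 1)
  - A 0 1 * (A 1 0 * A 2 2 - A 1 2 * A 2 0)
  + A 0 2 * (A 1 0 * A 2 1 - A 1 1 * A 2 0).
Proof.
rewrite (expand_det_row _ ord0) sum3 /cofactor.
rewrite !(expand_det_row _ ord0) !sum2 /cofactor !det_mx11 !mxE /=.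
have E : forall i j : 'I_3, A i j = e A i j by move=> i j; rewrite /e !inord_val.
rewrite !E /= expr0 expr1; ring.
Qed.

Lemma ZrotD a b : Zrot a *m Zrot b = Zrot (a + b) :> 'M[R]_3.
Proof. mxext; rewrite ?cosD ?sinD; ring. Qed.

Lemma Zrot0 : Zrot 0 = 1%:M :> 'M[R]_3.
Proof. mxext; rewrite ?cos0 ?sin0; ring. Qed.

Lemma SO3_Zrot t : SO3 (Zrot t : 'M[R]_3).
Proof.
have h := cos2Dsin2 t; split.
  by mxext; rewrite ?mxE /=; nra.
rewrite det3 /Zrot /mx3 !mxE /=; nra.
Qed.

Lemma SO3_Yrot t : SO3 (Yrot t : 'M[R]_3).
Proof.
have h := cos2Dsin2 t; split.
  by mxext; rewrite ?mxE /=; nra.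
rewrite det3 /Yrot /mx3 !mxE /=; nra.
Qed.

Lemma SO3_unit (A : 'M[R]_3) : SO3 A -> A \in unitmx.
Proof. by case=> h _; case: (mulmx1_unit h). Qed.

Lemma SO3_inv (A : 'M[R]_3) : SO3 A -> invmx A = A^T.
Proof.
move=> hA; have [h _] := hA; have h' := mulmx1C h.
by rewrite -[invmx A]mulmx1 -h' mulmxA mulVmx ?mul1mx // SO3_unit.
Qed.

Lemma SO3_rinv (A : 'M[R]_3) : SO3 A -> A *m A^T = 1%:M.
Proof. by case=> h _; exact: mulmx1C. Qed.

Lemma SO3_mul (A B : 'M[R]_3) : SO3 A -> SO3 B -> SO3 (A *m B).
Proof.
move=> [hA dA] [hB dB]; split; last by rewrite det_mulmx dA dB mulr1.
by rewrite trmx_mul mulmxA -(mulmxA B^T) hA mulmx1 hB.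
Qed.

Lemma SO3_tr (A : 'M[R]_3) : SO3 A -> SO3 A^T.
Proof.
move=> hA; split; last by rewrite det_tr; case: hA.
by rewrite trmxK SO3_rinv.
Qed.


Lemma per_z (f : R -> R) T : periodic f T -> forall (k : int) x, f (x + T * k%:~R) = f x.
Proof.
move=> hf [n|n] x.
  by rewrite -pmulrn mulr_natr periodicn.
rewrite NegzE mulrNz mulrN -pmulrn mulr_natr.
by rewrite -[in RHS](subrK (T *+ n.+1) x) periodicn.
Qed.

Lemma arg_exists (c s : R) : c ^+ 2 + s ^+ 2 = 1 ->
  exists t, 0 <= t <= 2 * pi /\ cos t = c /\ sin t = s.
Proof.
move=> h.
have hc : -1 <= c <= 1.
  have h2 : s ^+ 2 >= 0 by rewrite sqr_ge0.
  apply/andP; split; nra.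
have hpi := pi_gt0 R.
have hs2 : Num.sqrt (1 - c ^+ 2) = `|s| by rewrite -sqrtr_sqr; congr Num.sqrt; lra.
have a0 := acos_ge0 hc; have api := acos_lepi hc.
have [s0|s0] := leP 0 s.
  exists (acos c); split; first by lra.
  by rewrite acosK ?in_itv //= sin_acos // hs2 ger0_norm.
exists (2 * pi - acos c); split; first by lra.
have e : 2 * pi - acos c = - acos c + pi *+ 2 by rewrite addrC mulr_natl.
rewrite e cosD2pi sinD2pi cosN sinN acosK ?in_itv //= sin_acos // hs2 ltr0_norm //.
by rewrite opprK.
Qed.


Ltac colext := apply/matrixP; move=> [[|[|[|?]]] ?] [[|?] ?] //; rewrite ?(mxE, sum3) /=.

Definition col3 (x y z : R) : 'cV[R]_3 := \col_(k < 3) nth 0 [:: x; y; z] k.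

Lemma sphE a b : sph a b = col3 (cos a * sin b) (sin a * sin b) (cos b).
Proof. rewrite /sph; colext; ring. Qed.

Lemma col3E (v : 'cV[R]_3) : v = col3 (v 0 0) (v 1 0) (v 2 0).
Proof. by colext; congr (v _ _); apply/val_inj. Qed.

Lemma unit_S2 (v : 'cV[R]_3) : v 0 0 ^+ 2 + v 1 0 ^+ 2 + v 2 0 ^+ 2 = 1 -> S2 v.
Proof.
move=> h; rewrite [v]col3E; set x := v 0 0 in h *; set y := v 1 0 in h *; set z := v 2 0 in h *.
have hz : -1 <= z <= 1.
  have h2 : x ^+ 2 + y ^+ 2 >= 0 by rewrite addr_ge0 // sqr_ge0.
  apply/andP; split; nra.
have a0 := acos_ge0 hz; have api := acos_lepi hz.
have hr : Num.sqrt (1 - z ^+ 2) ^+ 2 = x ^+ 2 + y ^+ 2.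
  rewrite sqr_sqrtr; first lra.
  by rewrite subr_ge0; nra.
set r := Num.sqrt (1 - z ^+ 2) in hr.
have r0 : 0 <= r by rewrite sqrtr_ge0.
have hpi := pi_gt0 R.
have [rz|rnz] := eqVneq r 0.
  have hx2 : x ^+ 2 = 0 by move: hr; rewrite rz expr0n /=; have := sqr_ge0 x; have := sqr_ge0 y; lra.
  have hy2 : y ^+ 2 = 0 by move: hr; rewrite rz expr0n /=; have := sqr_ge0 x; have := sqr_ge0 y; lra.
  have x0 : x = 0 by apply/eqP; rewrite -sqrf_eq0 hx2.
  have y0 : y = 0 by apply/eqP; rewrite -sqrf_eq0 hy2.
  exists (0, acos z); split; first by rewrite /angles_ok /=; lra.
  rewrite sphE /= sin_acos // -/r rz acosK ?in_itv //= x0 y0 !mulr0.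
  by [].
have rp : 0 < r by rewrite lt_def rnz r0.
have [t [ht [ct st]]] : exists t, 0 <= t <= 2 * pi /\ cos t = x / r /\ sin t = y / r.
  apply: arg_exists; rewrite !expr_div_n -mulrDl -hr divff //.
  by rewrite expf_neq0.
exists (t, acos z); split; first by rewrite /angles_ok /=; lra.
rewrite sphE /= sin_acos // -/r acosK ?in_itv //= ct st !mulfVK //.
Qed.

Lemma nvecE : nvec R = col3 0 0 1.
Proof. by colext. Qed.

Lemma mul_nvec (M : 'M[R]_3) : M *m nvec R = col3 (M 0 2) (M 1 2) (M 2 2).
Proof.
colext; rewrite ?mulr0 ?mulr1 ?add0r; congr (M _ _); apply/val_inj => //.
Qed.

Lemma SO3_S2 (M : 'M[R]_3) : SO3 M -> S2 (M *m nvec R).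
Proof.
move=> [h _]; apply: unit_S2; rewrite mul_nvec /col3 !mxE /=.
have := congr1 (fun A : 'M[R]_3 => A 2 2) h; rewrite ?(mxE, sum3) /=.
have E : forall i j : 'I_3, M i j = e M i j by move=> i j; rewrite /e !inord_val.
rewrite !E /= => H; apply: (etrans _ H); ring.
Qed.


Lemma stab (N : 'M[R]_3) : SO3 N -> N *m nvec R = nvec R -> exists t, N = Zrot t.
Proof.
move=> hN hn; have [h1 d1] := hN; have h2 := SO3_rinv hN.
rewrite mul_nvec nvecE in hn.
have n0 := congr1 (fun v : 'cV[R]_3 => v 0 0) hn.
have n1 := congr1 (fun v : 'cV[R]_3 => v 1 0) hn.
have n2 := congr1 (fun v : 'cV[R]_3 => v 2 0) hn.
have a00 := congr1 (fun A : 'M[R]_3 => A 0 0) h1.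
have a11 := congr1 (fun A : 'M[R]_3 => A 1 1) h1.
have a01 := congr1 (fun A : 'M[R]_3 => A 0 1) h1.
have b22 := congr1 (fun A : 'M[R]_3 => A 2 2) h2.
rewrite det3 in d1.
move: n0 n1 n2 a00 a11 a01 b22; rewrite ?(mxE, sum3) /=.
have E : forall i j : 'I_3, N i j = e N i j by move=> i j; rewrite /e !inord_val.
rewrite !E /= in d1 *.
move=> n0 n1 n2 a00 a11 a01 b22.
have s20 : e N 2 0 ^+ 2 + e N 2 1 ^+ 2 = 0 by rewrite n2 in b22; nra.
have z20 : e N 2 0 = 0.
  apply/eqP; rewrite -sqrf_eq0; apply/eqP; have := sqr_ge0 (e N 2 0); have := sqr_ge0 (e N 2 1); lra.
have z21 : e N 2 1 = 0.
  apply/eqP; rewrite -sqrf_eq0; apply/eqP; have := sqr_ge0 (e N 2 0); have := sqr_ge0 (e N 2 1); lra.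
rewrite n0 n1 n2 z20 z21 in d1 a00 a11 a01 b22.
have q : (e N 1 1 - e N 0 0) ^+ 2 + (e N 0 1 + e N 1 0) ^+ 2 = 0 by nra.
have q1 : e N 1 1 = e N 0 0.
  apply/eqP; rewrite -subr_eq0 -sqrf_eq0; apply/eqP.
  have := sqr_ge0 (e N 1 1 - e N 0 0); have := sqr_ge0 (e N 0 1 + e N 1 0); lra.
have q2 : e N 0 1 = - e N 1 0.
  apply/eqP; rewrite -addr_eq0 -sqrf_eq0; apply/eqP.
  have := sqr_ge0 (e N 1 1 - e N 0 0); have := sqr_ge0 (e N 0 1 + e N 1 0); lra.
have [t [_ [ct st]]] : exists t, 0 <= t <= 2 * pi /\ cos t = e N 0 0 /\ sin t = e N 1 0.
  by apply: arg_exists; nra.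
exists t; apply/matrixP => i j; rewrite !E.
case: i => [[|[|[|?]]] ?]; case: j => [[|[|[|?]]] ?] //; rewrite /Zrot /mx3 !mxE /= ?ct ?st //.
Qed.

Lemma Zper t : exists h, 0 <= h <= 1 /\ Zrot (2 * pi * h) = Zrot t :> 'M[R]_3.
Proof.
have hpi := pi_gt0 R.
set k := Num.floor (t / (2 * pi)).
have [kl ku] := andP (floor_itv (t / (2 * pi))); rewrite -/k in kl ku.
exists (t / (2 * pi) - k%:~R); split.
  rewrite intrD in ku; apply/andP; split; lra.
have -> : 2 * pi * (t / (2 * pi) - k%:~R) = t + (pi *+ 2) * (- k)%:~R.
  rewrite mulrBr mulrCA divff ?mulr1; last by rewrite mulf_neq0 // gt_eqF.
  by rewrite intrN mulrN mulr_natl.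
by rewrite /Zrot (per_z (@cosD2pi R)) (per_z (@sinD2pi R)).
Qed.


Lemma Zrot_n t : Zrot t *m nvec R = nvec R.
Proof. by rewrite mul_nvec nvecE /Zrot /mx3 !mxE. Qed.

Lemma Zrot_cs a b : Zrot a = Zrot b :> 'M[R]_3 -> cos a = cos b /\ sin a = sin b.
Proof.
move=> h; have h0 := congr1 (fun A : 'M[R]_3 => A 0 0) h.
have h1 := congr1 (fun A : 'M[R]_3 => A 1 0) h.
by move: h0 h1; rewrite /Zrot /mx3 !mxE /=.
Qed.

Definition Aof (s : 'cV[R]_3) : 'M[R]_3 :=
  let ab := xget (0, 0) [set ab | angles_ok ab /\ sph ab.1 ab.2 = s] in
  Zrot ab.1 *m Yrot ab.2.

Lemma TmapE p : Tmap p = Aof p.1 *m Zrot (2 * pi * p.2).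
Proof. by []. Qed.

Lemma Aof_SO3 s : SO3 (Aof s).
Proof. by apply: SO3_mul; [exact: SO3_Zrot|exact: SO3_Yrot]. Qed.

Lemma Aof_n s : S2 s -> Aof s *m nvec R = s.
Proof.
move=> [ab hab]; rewrite /Aof.
set P := [set ab | angles_ok ab /\ sph ab.1 ab.2 = s].
have hP : P ab by split; [exact: hab.1|exact/esym/hab.2].
have := @xgetPex _ (0, 0) P (ex_intro _ ab hP).
by case=> _ <-.
Qed.

Lemma Tmap_SO3 (p : 'cV[R]_3 * R) : SO3 (Tmap p).
Proof. by rewrite TmapE; apply: SO3_mul; [exact: Aof_SO3|exact: SO3_Zrot]. Qed.

Lemma Tmap_n p : S2 p.1 -> Tmap p *m nvec R = p.1.
Proof. by move=> h; rewrite TmapE -mulmxA Zrot_n Aof_n. Qed.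

Lemma fix_rot (A M : 'M[R]_3) : SO3 A -> SO3 M -> A *m nvec R = M *m nvec R ->
  exists t, M = A *m Zrot t.
Proof.
move=> hA hM hn.
have hN : SO3 (A^T *m M) by apply: SO3_mul => //; exact: SO3_tr.
have hNn : (A^T *m M) *m nvec R = nvec R.
  by rewrite -mulmxA -hn mulmxA; case: hA => -> _; rewrite mul1mx.
have [t ht] := stab hN hNn.
exists t; rewrite -ht mulmxA SO3_rinv // mul1mx //.
Qed.

Lemma Tinv_spec (M : 'M[R]_3) : SO3 M -> S2H (Tinv M) /\ Tmap (Tinv M) = M.
Proof.
move=> hM; rewrite /Tinv.
suff hex : exists p, S2H p /\ Tmap p = M.
  exact: (@xgetPex _ (nvec R, 0) [set p | S2H p /\ Tmap p = M] hex).
have hs := SO3_S2 hM.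
have [t ht] := fix_rot (Aof_SO3 (M *m nvec R)) hM (Aof_n hs).
have [h [hh hz]] := Zper t.
exists (M *m nvec R, h); split; first by split.
by rewrite TmapE /= hz -ht.
Qed.

Lemma Tinv1 (M : 'M[R]_3) : SO3 M -> (Tinv M).1 = M *m nvec R.
Proof.
move=> hM; have [[h1 _] h2] := Tinv_spec hM.
by rewrite -{2}h2 Tmap_n.
Qed.

Lemma Tinv_shift (M : 'M[R]_3) : SO3 M -> exists th, forall g,
  (Tinv (M *m Zrot g)).1 = M *m nvec R /\ 0 <= (Tinv (M *m Zrot g)).2 <= 1 /\ Zrot (2 * pi * (Tinv (M *m Zrot g)).2) = Zrot (th + g).
Proof.
move=> hM; set A := Aof (M *m nvec R).
have [th hth] := fix_rot (Aof_SO3 (M *m nvec R)) hM (Aof_n (SO3_S2 hM)).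
exists th => g.
have hMg : SO3 (M *m Zrot g) by apply: SO3_mul => //; exact: SO3_Zrot.
have e1 : (Tinv (M *m Zrot g)).1 = M *m nvec R by rewrite Tinv1 // -mulmxA Zrot_n.
have [[_ h2] hT] := Tinv_spec hMg.
split => //; split => //.
have hT2 : A *m Zrot (2 * pi * (Tinv (M *m Zrot g)).2) = A *m Zrot (th + g).
  by rewrite -ZrotD mulmxA -hth -[in RHS]hT TmapE e1.
have := congr1 (fun X => A^T *m X) hT2.
have hA : A^T *m A = 1%:M by case: (Aof_SO3 (M *m nvec R)).
by move=> /=; rewrite mulmxA hA mul1mx mulmxA hA mul1mx.
Qed.

Lemma Tmap_act (Q : 'M[R]_3) (p : 'cV[R]_3 * R) : SO3 Q -> S2H p -> exists phi,
  Tmap (actQ Q p) = Q *m Tmap p *m Zrot phi.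
Proof.
move=> hQ [hs hh].
have hQA : SO3 (Q *m Aof p.1) by apply: SO3_mul => //; exact: Aof_SO3.
have hQs : S2 (Q *m p.1) by rewrite -(Aof_n hs) mulmxA; exact: SO3_S2.
have hAn : Aof (Q *m p.1) *m nvec R = Q *m Aof p.1 *m nvec R.
  by rewrite Aof_n // -mulmxA Aof_n.
have [t ht] := fix_rot (Aof_SO3 (Q *m p.1)) hQA hAn.
exists (- t).
rewrite !TmapE /=; move: (Aof p.1) (Aof (Q *m p.1)) ht => A B ht.
rewrite mulmxA ht -!mulmxA !ZrotD; congr (_ *m Zrot _); ring.
Qed.

End Geo.


Section Meas.
Variable R : realType.

Lemma sum3' (F : 'I_3 -> R) : \sum_(k < 3) F k = F ord0 + F (lift ord0 ord0) + F (lift ord0 (lift ord0 ord0)).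
Proof. by rewrite !big_ord_recl big_ord0 addr0 addrA. Qed.


Section Cont.
Variable T : topologicalType.
Implicit Types f g : T -> R.
Lemma contD f g : continuous f -> continuous g -> continuous (fun x => f x + g x).
Proof. by move=> hf hg x; apply: cvgD; [exact: hf|exact: hg]. Qed.
Lemma contB f g : continuous f -> continuous g -> continuous (fun x => f x - g x).
Proof. by move=> hf hg x; apply: cvgB; [exact: hf|exact: hg]. Qed.
Lemma contM f g : continuous f -> continuous g -> continuous (fun x => f x * g x).
Proof. by move=> hf hg x; apply: cvgM; [exact: hf|exact: hg]. Qed.
Lemma contN f : continuous f -> continuous (fun x => - f x).
Proof. by move=> hf x; apply: cvgN; exact: hf. Qed.
Lemma contC (c : R) : continuous (fun _ : T => c).
Proof. by move=> x; exact: cvg_cst. Qed.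
End Cont.

Lemma contE (i j : 'I_3) : continuous (fun M : 'M[R]_3 => M i j).
Proof. exact: coord_continuous. Qed.

Lemma mx_cont (T : topologicalType) (g : T -> 'M[R]_3) :
  (forall i j, continuous (fun x => g x i j)) -> continuous g.
Proof.
move=> hg x A /= hA.
case: hA => P hP sPA.
have : \forall y \near x, forall i j, P i j (g y i j).
  apply: filter_forall => i; apply: filter_forall => j.
  exact: (hg i j x _ (hP i j)).
by apply: filterS => y hy; apply: sPA.
Qed.

Lemma closed_SO3 : closed (@SO3 R : set 'M[R]_3).
Proof.
have -> : (@SO3 R : set 'M[R]_3) =
  \bigcap_(ij in [set: 'I_3 * 'I_3]) [set M : 'M[R]_3 | (M^T *m M) ij.1 ij.2 = (1%:M : 'M[R]_3) ij.1 ij.2]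
  `&` [set M | \det M = 1].
  apply/seteqP; split => M /=.
    by move=> [h1 h2]; split => // -[i j] _ /=; rewrite h1.
  move=> [h1 h2]; split => //; apply/matrixP => i j; exact: (h1 (i, j)).
apply: closedI.
  apply: closed_bigI => -[i j] _ /=.
  have -> : [set M : 'M[R]_3 | (M^T *m M) i j = (1%:M : 'M[R]_3) i j] =
    (fun M : 'M[R]_3 => (M^T *m M) i j) @^-1` [set x | x = (1%:M : 'M[R]_3) i j] by [].
  apply: (proj1 (continuous_closedP _)); last exact: closed_eq.
  have -> : (fun M : 'M[R]_3 => (M^T *m M) i j) = (fun M => M ord0 i * M ord0 j + M (lift ord0 ord0) i * M (lift ord0 ord0) j + M (lift ord0 (lift ord0 ord0)) i * M (lift ord0 (lift ord0 ord0)) j).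
    by apply/funext => M; rewrite !mxE sum3' !mxE.
  by repeat apply: contD; apply: contM; apply: contE.
have -> : [set M : 'M[R]_3 | \det M = 1] = (fun M : 'M[R]_3 => \det M) @^-1` [set x | x = 1] by [].
apply: (proj1 (continuous_closedP _)); last exact: closed_eq.
have -> : (fun M : 'M[R]_3 => \det M) = (fun M => 
  M 0 0 * (M 1 1 * M 2 2 - M 1 2 * M 2 1)
  - M 0 1 * (M 1 0 * M 2 2 - M 1 2 * M 2 0)
  + M 0 2 * (M 1 0 * M 2 1 - M 1 1 * M 2 0)).
  by apply/funext => M; rewrite det3.
by repeat first [apply: contD | apply: contN | apply: contM | apply: contE].
Qed.

Lemma measurable_SO3 : measurable (@SO3 R : set (MXB R)).
Proof.
rewrite -[@SO3 R]setCK; apply: measurableC; apply: sub_sigma_algebra.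
by rewrite openC; exact: closed_SO3.
Qed.

Lemma measurable_mulQ (Q : 'M[R]_3) : measurable_fun setT (fun M : MXB R => (Q *m M : MXB R)).
Proof.
apply: measurability; first reflexivity.
move=> _ [A oA <-]; rewrite setTI; apply: sub_sigma_algebra.
apply: (@open_comp _ _ (fun M : 'M[R]_3 => Q *m M)) => //.
move=> M _; apply: mx_cont => i j.
have -> : (fun M : 'M[R]_3 => (Q *m M) i j) = (fun M => Q i ord0 * M ord0 j + Q i (lift ord0 ord0) * M (lift ord0 ord0) j + Q i (lift ord0 (lift ord0 ord0)) * M (lift ord0 (lift ord0 ord0)) j).
  by apply/funext => N; rewrite !mxE sum3'.
by repeat first [apply: contD | apply: contM | apply: contE | apply: contC].
Qed.

End Meas.


Section OneD.
Variable R : realType.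
Local Notation leb := (@lebesgue_measure R).

Lemma mshift (c : R) : measurable_fun setT (fun x : R => x + c).
Proof. by apply: measurable_funD => //; exact: measurable_cst. Qed.

Lemma leb_shift (c : R) (A : set R) : measurable A ->
  pushforward leb (fun x : R => x + c) A = leb A.
Proof.
move=> mA.
have := @lebesgue_measure_unique R (pushforward leb ((fun x : R => x + c) : _ -> measurableTypeR R)) _ A mA.
move=> /(_ (mshift c)) h; apply/esym/h => _ [[a b] _ <-] /=.
rewrite /pushforward.
have -> : (fun x : R => x + c) @^-1` `]a, b] = `]a - c, b - c]%classic.
  apply/seteqP; split => x /=; rewrite !in_itv /= => /andP[h1 h2]; apply/andP; split; lra.
rewrite !lebesgue_measure_itv /= !lte_fin.
have -> : (a - c < b - c) = (a < b) by rewrite ltrD2r.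
by case: ifP => // _; congr EFin; ring.
Qed.

Lemma int_shift (k : R -> \bar R) (a b c : R) : (forall x, (0 <= k x)%E) ->
  measurable_fun `]a + c, b + c[ k ->
  (\int[leb]_(x in `]a, b[) k (x + c)%R = \int[leb]_(y in `](a + c)%R, (b + c)%R[) k y)%E.
Proof.
move=> k0 mk.
have e : (fun x : R => x + c) @^-1` `]a + c, b + c[ = `]a, b[%classic.
  apply/seteqP; split => x /=; rewrite !in_itv /= => /andP[h1 h2]; apply/andP; split; lra.
have := @ge0_integral_pushforward _ _ (measurableTypeR R) (measurableTypeR R) R (fun x : R => x + c) (mshift c) leb `]a + c, b + c[ k
  (measurable_itv _) mk (fun y _ => k0 y).
rewrite e => <-.
apply: eq_measure_integral; first exact: mshift.
move=> mf A mA _; exact: (leb_shift c mA).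
Qed.


Lemma cos_eq1 (u : R) : 0 <= u <= 2 * pi -> cos u = 1 -> u = 0 \/ u = 2 * pi.
Proof.
move=> hu cu; have hpi := pi_gt0 R.
have [le|lt] := leP u pi.
  left; apply: cos_inj; rewrite ?in_itv /= ?cos0 //; apply/andP; split; lra.
right.
have cv : cos (2 * pi - u) = 1.
  have -> : 2 * pi - u = - u + pi *+ 2 by rewrite addrC mulr_natl.
  by rewrite cosD2pi cosN.
suff : 2 * pi - u = 0 by lra.
apply: cos_inj; rewrite ?in_itv /= ?cos0 //; apply/andP; split; lra.
Qed.

Lemma cs_eq (x y : R) : 0 <= x <= 2 * pi -> 0 <= y <= 2 * pi ->
  cos x = cos y -> sin x = sin y ->
  x = y \/ (x = 0 /\ y = 2 * pi) \/ (x = 2 * pi /\ y = 0).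
Proof.
move=> hx hy cx sx.
have ct : cos `|x - y| = 1 by rewrite cos_norm cosB cx sx -!expr2 cos2Dsin2.
have hu : 0 <= `|x - y| <= 2 * pi.
  rewrite normr_ge0 /=; have [h|h] := leP 0 (x - y).
    by rewrite ger0_norm //; lra.
  by rewrite ltr0_norm //; lra.
have [h|h] := cos_eq1 hu ct.
  by left; apply/eqP; rewrite -subr_eq0 -normr_eq0 h.
right; have [h'|h'] := leP 0 (x - y).
  by rewrite ger0_norm // in h; right; lra.
by rewrite ltr0_norm // in h; left; lra.
Qed.


Lemma disj_oc (a c b : R) : [disjoint `]a, c[ & `[c, b[]%classic.
Proof.
apply: lt_disjoint => x y; rewrite !in_itv /= => /andP[_ h1] /andP[h2 _].
exact: lt_le_trans h1 h2.
Qed.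

Lemma disj_co (a c b : R) : [disjoint `]a, c] & `]c, b[]%classic.
Proof.
apply: lt_disjoint => x y; rewrite !in_itv /= => /andP[_ h1] /andP[h2 _].
exact: le_lt_trans h1 h2.
Qed.

Lemma split_oo (a c b : R) : a < c -> c <= b ->
  `]a, b[%classic = `]a, c[%classic `|` `[c, b[%classic.
Proof. by move=> ac cb; apply: itv_bndbnd_setU; rewrite bnd_simp. Qed.

Lemma split_oc (a c b : R) : a <= c -> c < b ->
  `]a, b[%classic = `]a, c]%classic `|` `]c, b[%classic.
Proof. by move=> ac cb; apply: itv_bndbnd_setU; rewrite bnd_simp. Qed.

Lemma oneD0 (k : R -> \bar R) (th : R) (tau : R -> R) :
  0 <= th < 2 * pi ->
  (forall x, (0 <= k x)%E) ->
  (forall g, 0 <= tau g <= 1 /\ cos (2 * pi * tau g) = cos (th + g) /\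
     sin (2 * pi * tau g) = sin (th + g)) ->
  measurable_fun `[0, 2 * pi] (fun g => k (tau g)) ->
  measurable_fun `]0, 2 * pi[ (fun x => k (x / (2 * pi))) /\
  (\int[leb]_(g in `[0%R, (2 * pi)%R]) k (tau g) =
   \int[leb]_(x in `]0%R, (2 * pi)%R[) k (x / (2 * pi))%R)%E.
Proof.
move=> /andP[th0 th1] k0 htau mk.
have hpi := pi_gt0 R.
set P := 2 * pi.
have eP : P = 2 * pi by [].
have hP : 0 < P by rewrite /P; lra.
have P0 : P != 0 by rewrite gt_eqF.
have rng : forall g, 0 <= P * tau g <= P.
  move=> g; have [/andP[t0 t1] _] := htau g; apply/andP; split; nra.
have F1 : forall g, 0 < g < P - th -> tau g = (g + th) / P.
  move=> g /andP[g1 g2]; have [_ [c s]] := htau g.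
  have hy : 0 <= th + g <= P by apply/andP; split; lra.
  have [e|[[_ e]|[_ e]]] := cs_eq (rng g) hy c s; last 2 first.
  - lra.
  - lra.
  by apply: (mulfI P0); rewrite mulrCA divff // mulr1 -/P e addrC.
have F2 : forall g, P - th < g <= P -> tau g = (g + (th - P)) / P.
  move=> g /andP[g1 g2]; have [_ [c s]] := htau g.
  have hy : 0 <= g + (th - P) <= P by apply/andP; split; lra.
  have ep : th + g = (g + (th - P)) + pi *+ 2 by rewrite -mulr_natl -/P; ring.
  rewrite ep cosD2pi in c; rewrite ep sinD2pi in s.
  have [e|[[_ e]|[_ e]]] := cs_eq (rng g) hy c s; last 2 first.
  - lra.
  - lra.
  by apply: (mulfI P0); rewrite mulrCA divff // mulr1 -/P e.
have mI1 : measurable_fun `]0, P - th[ (fun g => k (tau g)).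
  apply: measurable_funS mk => //; move=> x /=; rewrite !in_itv /= => /andP[h1 h2].
  apply/andP; split; lra.
have mI2 : measurable_fun `]P - th, P] (fun g => k (tau g)).
  apply: measurable_funS mk => //; move=> x /=; rewrite !in_itv /= => /andP[h1 h2].
  apply/andP; split; lra.
have mA : measurable_fun `]th, P[ (fun x => k (x / P)).
  have sub : (fun x => x + - th) @` `]th, P[ `<=` `]0, P - th[.
    move=> _ [x /= hx <-]; move: hx; rewrite !in_itv /= => /andP[h1 h2]; apply/andP; split; lra.
  have := measurable_comp (measurable_itv _) sub mI1 (measurable_funS measurableT (@subsetT _ _) (mshift (- th))).
  apply: eq_measurable_fun => x; rewrite inE /= in_itv /= => /andP[h1 h2].
  rewrite F1; last by apply/andP; split; lra.
  by congr k; congr (_ / _); ring.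
have mB : measurable_fun `]0, th] (fun x => k (x / P)).
  have sub : (fun x => x + (P - th)) @` `]0, th] `<=` `]P - th, P].
    move=> _ [x /= hx <-]; move: hx; rewrite !in_itv /= => /andP[h1 h2]; apply/andP; split; lra.
  have := measurable_comp (measurable_itv _) sub mI2 (measurable_funS measurableT (@subsetT _ _) (mshift (P - th))).
  apply: eq_measurable_fun => x; rewrite inE /= in_itv /= => /andP[h1 h2].
  rewrite F2; last by apply/andP; split; lra.
  by congr k; congr (_ / _); ring.
have mAll : measurable_fun `]0, P[ (fun x => k (x / P)).
  by rewrite (split_oc th0 th1) measurable_funU //; split.
split => //.
have mT : measurable_fun `]0, P[ (fun g => k (tau g)).
  apply: measurable_funS mk => //; move=> x /=; rewrite !in_itv /= => /andP[h1 h2].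
  apply/andP; split; lra.
have L1 : (\int[leb]_(g in `]0%R, (P - th)%R[) k (tau g) =
           \int[leb]_(x in `]th, P[) k (x / P)%R)%E.
  transitivity (\int[leb]_(g in `]0%R, (P - th)%R[) k ((g + th) / P)%R)%E.
    apply: eq_integral => g; rewrite inE /= in_itv /= => hg; by rewrite F1.
  have := @int_shift (fun y => k (y / P)) 0 (P - th) th (fun y => k0 _).
  by rewrite add0r subrK => /(_ mA).
have L2 : (\int[leb]_(g in `](P - th)%R, P[) k (tau g) =
           \int[leb]_(x in `]0%R, th[) k (x / P)%R)%E.
  transitivity (\int[leb]_(g in `](P - th)%R, P[) k ((g + (th - P)) / P)%R)%E.
    apply: eq_integral => g; rewrite inE /= in_itv /= => /andP[g1 g2].
    by rewrite F2 //; apply/andP; split; lra.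
  have := @int_shift (fun y => k (y / P)) (P - th) P (th - P) (fun y => k0 _).
  have -> : P - th + (th - P) = 0 by ring.
  have -> : P + (th - P) = th by ring.
  apply; apply: measurable_funS mB => //; move=> x /=; rewrite !in_itv /= => /andP[h1 h2].
  apply/andP; split; lra.
have LHS : (\int[leb]_(g in `[0%R, P]) k (tau g) =
   \int[leb]_(g in `]0%R, (P - th)%R[) k (tau g) + \int[leb]_(g in `](P - th)%R, P[) k (tau g))%E.
  rewrite integral_itv_bndoo // (@split_oo 0 (P - th) P); [|lra|lra].
  rewrite ge0_integral_setU //; last exact: disj_oc.
  - congr (_ + _)%E; apply: integral_itv_bndoo.
    apply: measurable_funS mT => //; move=> x /=; rewrite !in_itv /= => /andP[h1 h2].
    apply/andP; split; lra.
  - by rewrite -split_oo //; lra.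
have RHS : (\int[leb]_(x in `]0%R, P[) k (x / P)%R =
   \int[leb]_(x in `]0%R, th[) k (x / P)%R + \int[leb]_(x in `]th, P[) k (x / P)%R)%E.
  rewrite (split_oc th0 th1) ge0_integral_setU //; last exact: disj_co.
  - congr (_ + _)%E; apply: integral_itv_bndoo.
    apply: measurable_funS mB => //; move=> x /=; rewrite !in_itv /= => /andP[h1 h2].
    apply/andP; split; lra.
  - by rewrite -split_oc.
by rewrite LHS RHS L1 L2 addeC.
Qed.


Lemma per_z' (f : R -> R) T : periodic f T -> forall (k : int) x, f (x + T * k%:~R) = f x.
Proof.
move=> hf [n|n] x.
  by rewrite -pmulrn mulr_natr periodicn.
rewrite NegzE mulrNz mulrN -pmulrn mulr_natr.
by rewrite -[in RHS](subrK (T *+ n.+1) x) periodicn.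
Qed.

Lemma oneD (k : R -> \bar R) (th : R) (tau : R -> R) :
  (forall x, (0 <= k x)%E) ->
  (forall g, 0 <= tau g <= 1 /\ cos (2 * pi * tau g) = cos (th + g) /\
     sin (2 * pi * tau g) = sin (th + g)) ->
  measurable_fun `[0, 2 * pi] (fun g => k (tau g)) ->
  (\int[leb]_(g in `[0%R, (2 * pi)%R]) k (tau g) =
   \int[leb]_(x in `]0%R, (2 * pi)%R[) k (x / (2 * pi))%R)%E.
Proof.
move=> k0 htau mk.
have hpi := pi_gt0 R.
set m := Num.floor (th / (2 * pi)).
have [kl ku] := andP (floor_itv (th / (2 * pi))); rewrite -/m in kl ku.
rewrite intrD in ku.
set th' := 2 * pi * (th / (2 * pi) - m%:~R).
have e : th = th' + (pi *+ 2) * m%:~R.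
  rewrite /th' mulrBr mulrCA divff ?mulr1; last by rewrite mulf_neq0 // gt_eqF.
  by rewrite -mulr_natl; ring.
have hth' : 0 <= th' < 2 * pi.
  rewrite /th'; apply/andP; split; first by apply: mulr_ge0; lra.
  rewrite -[X in _ < X]mulr1 ltr_pM2l; lra.
apply: (oneD0 hth' k0 _ mk).2 => g.
have [h1 [h2 h3]] := htau g.
split => //; rewrite e -addrA [_ * m%:~R + g]addrC addrA in h2 h3.
by rewrite (per_z' (@cosD2pi R)) in h2; rewrite (per_z' (@sinD2pi R)) in h3.
Qed.

End OneD.


Section Main.
Variable R : realType.
Variable mu : {measure set (MXB R) -> \bar R}.
Hypothesis hfin : fin_num_fun mu.
Local Notation leb := (@lebesgue_measure R).

Definition muf (A : set (MXB R)) : \bar R := mu A.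
Let muf0 : muf set0 = 0%E. Proof. exact: measure0. Qed.
Let muf_ge0 A : (0 <= muf A)%E. Proof. exact: measure_ge0. Qed.
Let muf_sa : semi_sigma_additive muf. Proof. exact: measure_semi_sigma_additive. Qed.
HB.instance Definition _ := isMeasure.Build _ _ _ muf muf0 muf_ge0 muf_sa.
Let muf_fin : fin_num_fun muf. Proof. exact: hfin. Qed.
HB.instance Definition _ := Measure_isFinite.Build _ _ _ muf muf_fin.

Lemma mD : measurable (@conv_dom R).
Proof. apply: measurableX; [exact: measurable_SO3|exact: measurable_itv]. Qed.

Lemma F_in (u : MXB R * R -> \bar R) (M : MXB R) : SO3 M ->
  fubini_F leb (u \_ (@conv_dom R)) M = (\int[leb]_(g in `[0%R, (2 * pi)%R]) u (M, g))%E.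
Proof.
move=> hM; rewrite /fubini_F [RHS]integral_mkcond; apply: eq_integral => y _.
have e : ((M, y) \in @conv_dom R) = (y \in `[0, 2 * pi]%classic).
  apply/idP/idP => [/set_mem [] _ h|/set_mem h]; apply/mem_set => //; by split.
by rewrite /patch e.
Qed.

Lemma F_out (u : MXB R * R -> \bar R) (M : MXB R) : ~ SO3 M ->
  fubini_F leb (u \_ (@conv_dom R)) M = 0%E.
Proof.
move=> hM; rewrite /fubini_F; apply: integral0_eq => y _.
have e : ((M, y) \in @conv_dom R) = false.
  by apply/negbTE/negP => /set_mem [].
by rewrite /patch e.
Qed.



Lemma transfer (Q : 'M[R]_3) (u1 u2 : MXB R * R -> \bar R) :
  SO3 Q ->
  (forall A : set (MXB R), measurable A ->
     mu ((fun M : MXB R => (Q^T *m M : MXB R)) @^-1` A) = mu A) ->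
  (forall z, (0 <= u1 z)%E) -> (forall z, (0 <= u2 z)%E) ->
  measurable_fun (@conv_dom R) u1 -> measurable_fun (@conv_dom R) u2 ->
  (forall M : MXB R, SO3 M ->
     (\int[leb]_(g in `[0%R, (2 * pi)%R]) u1 (M, g) =
      \int[leb]_(g in `[0%R, (2 * pi)%R]) u2 ((Q^T *m M : MXB R), g))%E) ->
  (\int[mu \x leb]_(z in @conv_dom R) u1 z = \int[mu \x leb]_(z in @conv_dom R) u2 z)%E.
Proof.
move=> hQ hinv u10 u20 mu1 mu2 hsec.
have p10 : forall z, (0 <= (u1 \_ (@conv_dom R)) z)%E.
  by move=> z; rewrite /patch; case: ifP.
have p20 : forall z, (0 <= (u2 \_ (@conv_dom R)) z)%E.
  by move=> z; rewrite /patch; case: ifP.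
have mp1 : measurable_fun setT (u1 \_ (@conv_dom R)) by apply/(measurable_restrictT _ mD).
have mp2 : measurable_fun setT (u2 \_ (@conv_dom R)) by apply/(measurable_restrictT _ mD).
rewrite integral_mkcond [RHS]integral_mkcond.
have E (u : MXB R * R -> \bar R) : (\int[mu \x leb]_x u x = \int[muf \x leb]_x u x)%E.
  by apply: eq_measure_integral => A _ _.
rewrite !E.
have e1 := @fubini_tonelli1 _ _ _ _ R muf leb _ mp1 p10.
have e2 := @fubini_tonelli1 _ _ _ _ R muf leb _ mp2 p20.
rewrite e1 e2.
have hF : forall M : MXB R, fubini_F leb (u1 \_ (@conv_dom R)) M =
    fubini_F leb (u2 \_ (@conv_dom R)) (Q^T *m M : MXB R).
  move=> M; case: (pselect (SO3 M)) => hM.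
    rewrite F_in // F_in ?hsec //; exact: SO3_mul (SO3_tr hQ) hM.
  rewrite !F_out // => h2; apply: hM.
  have -> : M = Q *m (Q^T *m M) by rewrite mulmxA SO3_rinv // mul1mx.
  exact: SO3_mul hQ h2.
transitivity (\int[muf]_M fubini_F leb (u2 \_ (@conv_dom R)) (Q^T *m M : MXB R))%E.
  by apply: eq_integral => M _; exact: hF.
have mF2 := @measurable_fun_fubini_tonelli_F _ _ (MXB R) _ R leb _ mp2 p20.
have F20 : forall M, (0 <= fubini_F leb (u2 \_ (@conv_dom R)) M)%E.
  by move=> M; apply: integral_ge0 => y _.
have := @ge0_integral_pushforward _ _ (MXB R) (MXB R) R (fun M : MXB R => (Q^T *m M : MXB R))
  (measurable_mulQ Q^T) muf setT _ measurableT mF2 (fun y _ => F20 y).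
rewrite preimage_setT => <-.
apply: eq_measure_integral; first exact: measurable_mulQ.
by move=> mf A mA _; exact: (hinv A mA).
Qed.


Lemma sec_eq (hh : R -> \bar R) (psi f : 'cV[R]_3 * R -> R) (Q : 'M[R]_3)
  (p : 'cV[R]_3 * R) (M : MXB R) :
  (forall r, (0 <= hh r)%E) ->
  (forall (M : 'M[R]_3) (t : R), SO3 M -> adjT psi M = adjT psi (M *m Zrot t)) ->
  SO3 Q -> S2H p -> SO3 M ->
  measurable_fun `[0, 2 * pi] (fun g => hh (conv_integrand psi (LQ Q f) (actQ Q p) (M, g))) ->
  measurable_fun `[0, 2 * pi] (fun g => hh (conv_integrand psi f p ((Q^T *m M : MXB R), g))) ->
  (\int[leb]_(g in `[0%R, (2 * pi)%R]) hh (conv_integrand psi (LQ Q f) (actQ Q p) (M, g)) =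
   \int[leb]_(g in `[0%R, (2 * pi)%R]) hh (conv_integrand psi f p ((Q^T *m M : MXB R), g)))%E.
Proof.
move=> hh0 hpsi hQ hp hM m1 m2.
have hM' : SO3 (Q^T *m M) by apply: SO3_mul => //; exact: SO3_tr.
have [phi hphi] := Tmap_act hQ hp.
have [th1 h1] := Tinv_shift hM.
have [th2 h2] := Tinv_shift hM'.
set c := adjT psi (M^T *m Q *m Tmap p).
set s := Q^T *m (M *m nvec R).
set k := fun t => hh (c * f (s, t)).
have hc1 : adjT psi (invmx M *m Tmap (actQ Q p)) = c.
  rewrite SO3_inv // hphi (mulmxA M^T) (mulmxA M^T Q (Tmap p)) -hpsi //.
  by apply: SO3_mul; [apply: SO3_mul => //; exact: SO3_tr|exact: Tmap_SO3].
have hc2 : adjT psi (invmx (Q^T *m M) *m Tmap p) = c.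
  by rewrite SO3_inv // trmx_mul trmxK.
have E1 : forall g, hh (conv_integrand psi (LQ Q f) (actQ Q p) (M, g)) =
    k (Tinv (M *m Zrot g)).2.
  move=> g; rewrite /conv_integrand /= hc1 /k /adjT /LQ /actQ /=.
  have [e1 _] := h1 g.
  by rewrite e1 SO3_inv.
have E2 : forall g, hh (conv_integrand psi f p ((Q^T *m M : MXB R), g)) =
    k (Tinv (Q^T *m M *m Zrot g)).2.
  move=> g; rewrite /conv_integrand /= hc2 /k /adjT.
  have [e1 _] := h2 g.
  by rewrite [Tinv _]surjective_pairing e1 /s mulmxA.
have T1 : forall g, 0 <= (Tinv (M *m Zrot g)).2 <= 1 /\
    cos (2 * pi * (Tinv (M *m Zrot g)).2) = cos (th1 + g) /\
    sin (2 * pi * (Tinv (M *m Zrot g)).2) = sin (th1 + g).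
  by move=> g; have [_ [a b]] := h1 g; split => //; exact: Zrot_cs.
have T2 : forall g, 0 <= (Tinv (Q^T *m M *m Zrot g)).2 <= 1 /\
    cos (2 * pi * (Tinv (Q^T *m M *m Zrot g)).2) = cos (th2 + g) /\
    sin (2 * pi * (Tinv (Q^T *m M *m Zrot g)).2) = sin (th2 + g).
  by move=> g; have [_ [a b]] := h2 g; split => //; exact: Zrot_cs.
have k0 : forall t, (0 <= k t)%E by move=> t; exact: hh0.
transitivity (\int[leb]_(g in `[0%R, (2 * pi)%R]) k (Tinv (M *m Zrot g)).2)%E.
  by apply: eq_integral => g _; exact: E1.
transitivity (\int[leb]_(g in `[0%R, (2 * pi)%R]) k (Tinv (Q^T *m M *m Zrot g)).2)%E; last first.
  by apply: eq_integral => g _; rewrite E2.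
rewrite (oneD k0 T1); last by apply: eq_measurable_fun m1 => g _; exact: E1.
rewrite (oneD k0 T2) //; by apply: eq_measurable_fun m2 => g _; exact: E2.
Qed.


Lemma sect_meas (u : MXB R * R -> \bar R) (M : MXB R) : SO3 M ->
  measurable_fun (@conv_dom R) u -> measurable_fun `[0, 2 * pi] (fun g => u (M, g)).
Proof.
move=> hM mu0.
have mp : measurable_fun setT (u \_ (@conv_dom R)) by apply/(measurable_restrictT _ mD).
have := measurable_fun_pair2 M mp.
move/(measurable_funS measurableT (@subsetT _ `[0, 2 * pi])).
apply: eq_measurable_fun => y; rewrite inE /= => hy.
have e : ((M, y) \in @conv_dom R) by apply/mem_set; split.
by rewrite /patch e.
Qed.

Lemma main_eq (psi f : 'cV[R]_3 * R -> R) (Q : 'M[R]_3) (p : 'cV[R]_3 * R) :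
  (forall (M : 'M[R]_3) (t : R), SO3 M -> adjT psi M = adjT psi (M *m Zrot t)) ->
  SO3 Q -> S2H p ->
  (forall A : set (MXB R), measurable A ->
     mu ((fun M : MXB R => (Q^T *m M : MXB R)) @^-1` A) = mu A) ->
  (mu \x lebesgue_measure)%E.-integrable (@conv_dom R)
     (EFin \o conv_integrand psi f p) ->
  (mu \x lebesgue_measure)%E.-integrable (@conv_dom R)
     (EFin \o conv_integrand psi (LQ Q f) (actQ Q p)) ->
  sconv mu psi (LQ Q f) (actQ Q p) = sconv mu psi f p.
Proof.
move=> hpsi hQ hp inv int2 int1.
rewrite /sconv /Rintegral; congr fine.
set G1 := conv_integrand psi (LQ Q f) (actQ Q p).
set G2 := conv_integrand psi f p.
have key : forall hh : R -> \bar R, (forall r, (0 <= hh r)%E) ->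
    measurable_fun (@conv_dom R) (fun z => hh (G1 z)) ->
    measurable_fun (@conv_dom R) (fun z => hh (G2 z)) ->
    (\int[mu \x leb]_(z in @conv_dom R) hh (G1 z) =
     \int[mu \x leb]_(z in @conv_dom R) hh (G2 z))%E.
  move=> hh hh0 mh1 mh2.
  apply: (transfer hQ inv) => //.
  move=> M hM; apply: sec_eq => //.
  - exact: (sect_meas hM mh1).
  - apply: (sect_meas _ mh2); apply: SO3_mul => //; exact: SO3_tr.
rewrite integralE [RHS]integralE.
have m1 := measurable_int _ int1.
have m2 := measurable_int _ int2.
congr (_ - _)%E.
  transitivity (\int[mu \x leb]_(z in @conv_dom R) maxe (G1 z)%:E 0)%E.
    by apply: eq_integral => z _; rewrite funeposE.
  transitivity (\int[mu \x leb]_(z in @conv_dom R) maxe (G2 z)%:E 0)%E; last first.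
    by apply: eq_integral => z _; rewrite funeposE.
  apply: (key (fun r => maxe r%:E 0)%E).
  - by move=> r; rewrite le_max lexx orbT.
  - by apply: eq_measurable_fun (measurable_funepos m1) => z _; rewrite funeposE.
  - by apply: eq_measurable_fun (measurable_funepos m2) => z _; rewrite funeposE.
transitivity (\int[mu \x leb]_(z in @conv_dom R) maxe (- (G1 z)%:E) 0)%E.
  by apply: eq_integral => z _; rewrite funenegE.
transitivity (\int[mu \x leb]_(z in @conv_dom R) maxe (- (G2 z)%:E) 0)%E; last first.
  by apply: eq_integral => z _; rewrite funenegE.
apply: (key (fun r => maxe (- r%:E) 0)%E).
- by move=> r; rewrite le_max lexx orbT.
- by apply: eq_measurable_fun (measurable_funeneg m1) => z _; rewrite funenegE.
- by apply: eq_measurable_fun (measurable_funeneg m2) => z _; rewrite funenegE.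
Qed.

End Main.

Lemma haar_fin (R : realType) (mu : {measure set (MXB R) -> \bar R}) :
  haar mu -> fin_num_fun mu.
Proof.
move=> [hc h1 _] A mA.
have mS := @measurable_SO3 R.
have hT : mu setT = 1%E.
  rewrite -(setUv (@SO3 R : set (MXB R))) measureU //.
  - by transitivity (1%E + 0%E : \bar R)%E; [congr (_ + _)%E; [exact: h1|exact: hc]|rewrite adde0].
  - exact: measurableC.
  - by rewrite setICr.
rewrite ge0_fin_numE ?measure_ge0 //.
apply: (@le_lt_trans _ _ (mu setT)); first by apply: le_measure => //; rewrite inE.
by rewrite hT ltry.
Qed.

Unset Implicit Arguments.
Theorem theorem3 (R : realType) (mu : {measure set (MXB R) -> \bar R})
  (psi f : 'cV[R]_3 * R -> R) :
  haar mu ->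
  (forall (M : 'M[R]_3) (t : R), SO3 M ->
     adjT psi M = adjT psi (M *m Zrot t)) ->
  forall (Q : 'M[R]_3) (p : 'cV[R]_3 * R), SO3 Q -> S2H p ->
  (mu \x lebesgue_measure)%E.-integrable (@conv_dom R)
     (EFin \o conv_integrand psi f p) ->
  (mu \x lebesgue_measure)%E.-integrable (@conv_dom R)
     (EFin \o conv_integrand psi (LQ Q f) (actQ Q p)) ->
  sconv mu psi (LQ Q f) (actQ Q p) = sconv mu psi f p.
Proof.
move=> hH hpsi Q p hQ hp i2 i1.
have hfin := haar_fin hH.
case: hH => _ _ hinv.
apply: (main_eq hfin) => //.
exact: (hinv _ (SO3_tr hQ)).
Qed.
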